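(* Let $n$ be a positive integer and let $N = n^2+n+1$. Call a pair of integers $(k,x)$ a nontrivial solution for $n$ if $k \ge 1$, $x \ge 2$, $x \ne k$, $x \ne 2$, $k \ne n-1$, and \[ \sum_{j=1}^{n} j^3 + x^3 - k^3 = \left( \sum_{j=1}^{n} j + x - k \right)^2 . \] Then a nontrivial solution for $n$ exists if and only if $N$ has at least two prime factors, counted with multiplicity, that are congruent to $1 \pmod 3$.
   Context: The exclusions $x \ne k$, $x\ne 2$, $k \ne n-1$ remove the trivial solutions $(x,x)$ and $(n-1,2)$, which satisfy the identity for every $n$. ''Counted with multiplicity'' means: if $N=\prod p^{e_p}$, the number of such factors is $\sum_{p\equiv 1 \ (\mathrm{mod}\ 3)} e_p$. *)

(* Defs.v *)
From mathcomp Require Import all_boot all_order all_algebra.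
Set Implicit Arguments. Unset Strict Implicit. Unset Printing Implicit Defensive.
Import Order.TTheory GRing.Theory Num.Theory.
Local Open Scope ring_scope.

Definition nontrivial_solution (n : nat) (k x : int) : Prop :=
  [/\ 1 <= k, 2 <= x, x != k, x != 2 & k != (n%:Z - 1)] /\
  (\sum_(1 <= j < n.+1) (j%:Z) ^+ 3) + x ^+ 3 - k ^+ 3
    = ((\sum_(1 <= j < n.+1) (j%:Z)) + x - k) ^+ 2.

Definition count_1mod3_factors (N : nat) : nat :=
  (\sum_(p <- primes N | p %% 3 == 1) logn p N)%N.

(* Main.v *)
Require Import Defs.
From mathcomp Require Import all_boot all_order all_algebra all_field zify ring lra.
Set Implicit Arguments. Unset Strict Implicit. Unset Printing Implicit Defensive.
Import Order.TTheory GRing.Theory Num.Theory.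
Lemma count_split N p : p \in primes N -> p %% 3 == 1 ->
  count_1mod3_factors N =
  (logn p N + \sum_(q <- rem p (primes N) | q %% 3 == 1) logn q N)%N.
Proof.
move=> hp hP; rewrite /count_1mod3_factors (big_rem p) ?hP //.
Qed.

Lemma count_pair N : (0 < N)%N ->
  (2 <= count_1mod3_factors N)%N <->
  exists p q, [/\ prime p, prime q, p %% 3 = 1, q %% 3 = 1 & p * q %| N]%N.
Proof.
move=> N0; split.
- move=> h2.
  case: (boolP (has (fun p => p %% 3 == 1) (primes N))); last first.
    move/hasPn => hn. move: h2; rewrite /count_1mod3_factors big1_seq //.
    by move=> i /andP [hi1 hi2]; move: (hn _ hi2); rewrite hi1.
  move/hasP => [p hp hP].
  have pr : prime p by move: hp; rewrite mem_primes => /and3P [].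
  case: (leqP 2 (logn p N)) => hl.
    exists p, p; split => //; try exact/eqP.
    by rewrite mulnn (pfactor_dvdn _ pr N0).
  case: (boolP (has (fun q => q %% 3 == 1) (rem p (primes N)))); last first.
    move/hasPn => hn. move: h2; rewrite (count_split hp hP) big1_seq; last first.
      by move=> i /andP [hi1 hi2]; move: (hn _ hi2); rewrite hi1.
    by rewrite addn0 leqNgt hl.
  move/hasP => [q hq hQ].
  move: hq; rewrite (mem_rem_uniq _ (primes_uniq N)) inE => /andP [hqp hq].
  move: hq; rewrite mem_primes => /and3P [qr _ hqN].
  move: hp; rewrite mem_primes => /and3P [_ _ hpN].
  exists p, q; split => //; try exact/eqP.
  by rewrite Gauss_dvd ?hpN ?hqN // prime_coprime // dvdn_prime2 // eq_sym.
- move=> [p [q [pr qr hp hq hpq]]].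
  have hpN : p %| N by apply: dvdn_trans hpq; apply: dvdn_mulr.
  have hqN : q %| N by apply: dvdn_trans hpq; apply: dvdn_mull.
  have pP : p \in primes N by rewrite mem_primes pr N0 hpN.
  have qP : q \in primes N by rewrite mem_primes qr N0 hqN.
  rewrite (count_split pP (introT eqP hp)).
  case: (eqVneq q p) => [eqp|neqp].
    subst q. have : 2 <= logn p N by rewrite -(pfactor_dvdn _ pr N0) -mulnn.
    move=> h; apply: leq_trans h _; exact: leq_addr.
  have qR : q \in rem p (primes N) by rewrite (mem_rem_uniq _ (primes_uniq N)) inE neqp qP.
  rewrite (big_rem q qR) hq eqxx.
  have : 0 < logn p N by rewrite logn_gt0.
  have : 0 < logn q N by rewrite logn_gt0.
  move=> h1 h2 /=; set s := \big[_/_]_(_ <- _ | _) _; lia.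
Qed.
Local Open Scope ring_scope.
Lemma prime_div_N r n : prime r -> (r %| n * n + n + 1)%N -> r = 3%N \/ (r %% 3 = 1)%N.
Proof.
move=> pr hd.
have ch := pchar_Fp pr.
have h0 : (n%:R : 'F_r) * n%:R + n%:R + 1 = 0.
  by move: hd; rewrite (dvdn_pcharf ch) !natrD natrM => /eqP.
move: (n%:R : 'F_r) h0 => t h0.
have h3 : t ^+ 3 = 1.
  apply/eqP; rewrite -subr_eq0.
  have -> : t ^+ 3 - 1 = (t - 1) * (t * t + t + 1) by ring.
  by rewrite h0 mulr0.
have hr : t ^+ r = t by have := expf_card t; rewrite card_Fp.
have := divn_eq r 3; have : (r %% 3 < 3)%N by rewrite ltn_mod.
case: (r %% 3)%N => [|[|[|k]]] // _ hrd.
- left. have : (3 %| r)%N by rewrite hrd addn0 dvdn_mull.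
  by rewrite dvdn_prime2 // => /eqP.
- by right.
- have ht2 : t * t = t.
    have e := congr1 (fun m => t ^+ m) hrd; rewrite /= hr exprD mulnC exprM h3 expr1n mul1r in e.
    by rewrite {3}e expr2.
  have : t * (t - 1) = 0 by rewrite mulrBr mulr1 ht2 subrr.
  move/eqP; rewrite mulf_eq0 => /orP [/eqP t0|].
    by move: h0; rewrite t0 !mul0r !add0r => /eqP; rewrite oner_eq0.
  rewrite subr_eq0 => /eqP t1.
  move: h0; rewrite t1 mulr1 => /eqP.
  have -> : (1 + 1 + 1 : 'F_r) = 3%:R by rewrite -[3%N]/(1+1+1)%N !natrD.
  rewrite -(dvdn_pcharf ch) dvdn_prime2 // => /eqP r3.
  by move: hrd; rewrite r3.
Qed.

Lemma N_mod n d : ((n * n + n + 1) %% d = ((n %% d) * (n %% d) + n %% d + 1) %% d)%N.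
Proof.
rewrite {1 2 3}(divn_eq n d).
move: (n %/ d)%N (n %% d)%N => q r.
have -> : ((q * d + r) * (q * d + r) + (q * d + r) + 1 = (q * (q * d + 2 * r + 1)) * d + (r * r + r + 1))%N by ring.
by rewrite modnMDl.
Qed.

Lemma N_mod3 n : (3 %| n * n + n + 1)%N -> (n %% 3 = 1)%N.
Proof.
rewrite /dvdn N_mod. have : (n %% 3 < 3)%N by rewrite ltn_mod.
by case: (n %% 3)%N => [|[|[|k]]].
Qed.

Lemma N_mod9 n : ~~ (9 %| n * n + n + 1)%N.
Proof.
rewrite /dvdn N_mod. have : (n %% 9 < 9)%N by rewrite ltn_mod.
by case: (n %% 9)%N => [|[|[|[|[|[|[|[|[|k]]]]]]]]].
Qed.
Definition S (n : nat) : int := \sum_(1 <= j < n.+1) (j%:Z).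
Definition S3 (n : nat) : int := \sum_(1 <= j < n.+1) (j%:Z) ^+ 3.

Lemma S_succ n : S n.+1 = S n + n.+1%:Z.
Proof. by rewrite /S big_nat_recr. Qed.

Lemma S_eq n : 2 * S n = n%:Z * (n%:Z + 1).
Proof.
elim: n => [|n IH]; first by rewrite /S big_geq.
rewrite S_succ mulrDr IH -[n.+1]addn1 PoszD. ring.
Qed.

Lemma S3_eq n : S3 n = S n ^+ 2.
Proof.
elim: n => [|n IH]; first by rewrite /S3 /S !big_geq.
rewrite /S3 big_nat_recr //= -/(S3 n) IH S_succ.
have := S_eq n. rewrite -[n.+1]addn1 PoszD. move: (S n) => s h. nia.
Qed.

Definition Q (a b : int) : int := a * a + a * b + b * b.

Lemma reduce n :
  (exists k x : int, nontrivial_solution n k x) <->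
  exists u v : int, 2 <= u /\ 2 <= v /\ Q u v = (n ^ 2 + n + 1)%N%:Z.
Proof.
have hS := S_eq n.
have hNZ : (n ^ 2 + n + 1)%N%:Z = n%:Z * n%:Z + n%:Z + 1 by rewrite -mulnn !PoszD PoszM.
split.
- move=> [k [x [[hk hx hxk hx2 hkn] E]]].
  rewrite -/(S3 n) -/(S n) S3_eq in E.
  move: (S n) hS E => s hS E.
  have F : (x - k) * (x * x + x * k + k * k - x + k - n%:Z * n%:Z - n%:Z) = 0.
    nia.
  move/eqP: F; rewrite mulf_eq0 => /orP [|/eqP F].
    by rewrite subr_eq0 (negbTE hxk).
  exists (x - 1), (k + 1); rewrite hNZ /Q.
  have hx3 : 3 <= x by move/eqP: hx2 => hx2; lia.
  split; first lia. split; first lia. nia.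
- move=> [u [v [hu [hv E]]]].
  rewrite hNZ /Q in E.
  have hvn : v != n%:Z by apply/eqP => hvn; subst v; nia.
  have hun : u != n%:Z by apply/eqP => hun; subst u; nia.
  move/eqP: hvn => hvn; move/eqP: hun => hun.
  case: (eqVneq v (u + 2)) => hvu; last move/eqP: hvu => hvu.
  + exists (u - 1), (v + 1); split.
      split; try lia.
    rewrite -/(S3 n) -/(S n) S3_eq. move: (S n) hS => s hS. nia.
  + exists (v - 1), (u + 1); split.
      split; try lia.
    rewrite -/(S3 n) -/(S n) S3_eq. move: (S n) hS => s hS. nia.
Qed.


Lemma dvdz_primeM (p : nat) (a b : int) : prime p ->
  (p%:Z %| a * b)%Z -> (p%:Z %| a)%Z \/ (p%:Z %| b)%Z.
Proof. by move=> pr; rewrite !dvdzE abszM /= Euclid_dvdM // => /orP. Qed.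

Lemma core_nat (M A B : nat) : (0 < M)%N -> (M %| A * B)%N -> ~~ (M %| A)%N -> ~~ (M %| B)%N ->
  exists p q, [/\ prime p, prime q & (p * q %| M)%N].
Proof.
move=> M0 hAB nA nB.
set g := gcdn M A.
have g0 : (0 < g)%N by rewrite gcdn_gt0 M0.
have gM : (g %| M)%N by apply: dvdn_gcdl.
set h := (M %/ g)%N.
have hg : (h * g = M)%N by rewrite divnK.
have g1 : (1 < g)%N.
  rewrite ltn_neqAle g0 andbT; apply/negP => /eqP g1.
  have co : coprime M A by rewrite /coprime -/g -g1.
  by move: hAB; rewrite Gauss_dvdr // (negbTE nB).
have h1 : (1 < h)%N.
  have h0 : (0 < h)%N by rewrite divn_gt0 // dvdn_leq.
  rewrite ltn_neqAle h0 andbT; apply/negP => /eqP h1.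
  move: hg; rewrite -h1 mul1n => gM'.
  by move: nA; rewrite -gM' dvdn_gcdr.
exists (pdiv g), (pdiv h); split; try exact: pdiv_prime.
by rewrite -hg mulnC dvdn_mul // pdiv_dvd.
Qed.

Lemma fwd_helper (Nn M A B : nat) : (M %| Nn)%N -> ~~ (3 %| M)%N -> (0 < M)%N ->
  (forall r, prime r -> (r %| Nn)%N -> r = 3%N \/ (r %% 3 = 1)%N) ->
  (M %| A * B)%N -> ~~ (M %| A)%N -> ~~ (M %| B)%N ->
  exists p q, [/\ prime p, prime q, p %% 3 = 1, q %% 3 = 1 & p * q %| Nn]%N.
Proof.
move=> MN n3 M0 hr hAB nA nB.
have [p [q [pr qr hpq]]] := core_nat M0 hAB nA nB.
have hpM : (p %| M)%N by apply: dvdn_trans hpq; apply: dvdn_mulr.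
have hqM : (q %| M)%N by apply: dvdn_trans hpq; apply: dvdn_mull.
have hm : forall r, prime r -> (r %| M)%N -> (r %% 3 = 1)%N.
  move=> r rr rM; case: (hr r rr (dvdn_trans rM MN)) => // r3.
  by move: n3; rewrite -r3 rM.
exists p, q; split; auto; exact: dvdn_trans hpq MN.
Qed.


Lemma ar_bound (n u v : int) : 2 <= u -> 2 <= v -> 0 <= n ->
  u * u + u * v + v * v = n * n + n + 1 -> u <= n - 1.
Proof. move=> hu hv hn E. nia. Qed.

Lemma ar_Y (n u v : int) : 2 <= u -> 2 <= v -> u <= n - 1 -> v <= n - 1 ->
  - (n * n + n + 1) < u * n - v < n * n + n + 1.
Proof. move=> hu hv h1 h2. apply/andP; split; nia. Qed.

Lemma ar_Y0 (n u v : int) : 2 <= u -> 2 <= v -> 0 <= n ->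
  u * u + u * v + v * v = n * n + n + 1 -> u * n - v != 0.
Proof.
move=> hu hv hn E; apply/eqP => h. have hv' : v = u * n by lia.
subst v. nia.
Qed.

Lemma t1 (n u v : int) : 2 <= u -> 2 <= v -> u <= n - 1 -> v <= n - 1 ->
  0 < u * n + v + v * n < 2 * (n * n + n + 1).
Proof. move=> hu hv h1 h2. have h3 : u * n <= (n - 1) * n by nia. have h4 : v * n <= (n-1) * n by nia.
apply/andP; split; nia. Qed.
Lemma t2 (n u v : int) : 2 <= u -> 2 <= v -> u <= n - 1 -> v <= n - 1 ->
  u * u + u * v + v * v = n * n + n + 1 ->
  u * n + v + v * n != n * n + n + 1.
Proof.
move=> hu hv h1 h2 E. apply/eqP => h.
have idn : (u - v * n) * (u - v * n) + (u - v * n) * (u * n + v + v * n) + (u * n + v + v * n) * (u * n + v + v * n)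
      = (u * u + u * v + v * v) * (n * n + n + 1) by ring.
rewrite h E in idn.
have : (u - v * n) * ((u - v * n) + (n * n + n + 1)) = 0.
  move: idn; clear; lia.
have h4 : v * n <= (n-1) * n by nia.
have h5 : 2 * n <= v * n by nia.
move/eqP; rewrite mulf_eq0 => /orP [] /eqP; lia.
Qed.

Lemma fwd (n : nat) (u v : int) : 2 <= u -> 2 <= v ->
  Q u v = (n * n + n + 1)%N%:Z ->
  exists p q, [/\ prime p, prime q, p %% 3 = 1, q %% 3 = 1 & p * q %| n * n + n + 1]%N.
Proof.
move=> hu hv.
set Nn := (n * n + n + 1)%N.
have hN : Nn%:Z = n%:Z * n%:Z + n%:Z + 1 by rewrite /Nn !PoszD PoszM.
rewrite hN /Q => E.
have n0 : 0 <= n%:Z by [].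
have hun : u <= n%:Z - 1 by apply: ar_bound E.
have hvn : v <= n%:Z - 1.
  by apply: (ar_bound hv hu n0); rewrite -E; ring.
set Y := u * n%:Z - v.
set Y' := u * n%:Z + v + v * n%:Z.
have hYY : Y * Y' = (n%:Z * n%:Z - v * v) * Nn%:Z.
  have -> : Y * Y' = n%:Z * n%:Z * (u * u + u * v + v * v) - v * v * (n%:Z * n%:Z + n%:Z + 1).
    by rewrite /Y /Y'; ring.
  by rewrite E hN; ring.
have Y0 : Y != 0 by apply: ar_Y0 E.
have nA : ~~ (Nn %| `|Y|)%N.
  apply/negP => hd. have := dvdn_leq _ hd. rewrite absz_gt0 Y0 => /(_ isT).
  have := ar_Y hu hv hun hvn. rewrite -hN -/Y. move=> /andP [h1 h2]. lia.
have nB : ~~ (Nn %| `|Y'|)%N.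
  apply/negP => /dvdnP [k hk].
  have := t1 hu hv hun hvn. rewrite -hN -/Y' => /andP [h1 h2].
  have := t2 hu hv hun hvn E. rewrite -hN -/Y' => h3.
  have hk' : Y' = k%:Z * Nn%:Z.
    have : `|Y'|%:Z = Y' by apply: gez0_abs; lia.
    by move=> <-; rewrite hk PoszM.
  move: h1 h2 h3. rewrite hk'. clear. move=> h1 h2 /eqP h3.
  have k1 : (0 < k < 2)%N by nia.
  have k2 : k = 1%N by lia.
  by subst k; apply: h3; rewrite mul1r.
have hAB : (Nn %| `|Y| * `|Y'|)%N.
  by rewrite -abszM hYY abszM absz_nat dvdn_mull.
have hr := @prime_div_N ^~ n.
have N0 : (0 < Nn)%N by rewrite /Nn addn1.
case: (boolP (3 %| Nn)%N) => h3; last first.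
  exact: (fwd_helper (dvdnn Nn) h3 N0 hr hAB nA nB).
have n3 := N_mod3 h3.
have [a ha] : exists a : nat, n = (3 * a + 1)%N.
  by exists (n %/ 3)%N; rewrite {1}(divn_eq n 3) n3 mulnC.
have [b hb] : exists b : int, u - v = 3 * b.
  have : (3%:Z %| (u - v) * (u - v))%Z.
    have -> : (u - v) * (u - v) = Nn%:Z - 3 * (u * v) by rewrite hN -E; ring.
    apply: rpredB; first by rewrite dvdzE.
    by apply: dvdz_mulr; rewrite dvdzz.
  move=> /(dvdz_primeM (isT : prime 3)) [] /dvdzP [b hb]; exists b; lia.
have A3 : (3 %| `|Y|)%N.
  rewrite -(@dvdzE 3 Y). apply/dvdzP; exists (u * a%:Z + b).
  rewrite /Y ha PoszD PoszM. lia.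
have B3 : (3 %| `|Y'|)%N.
  rewrite -(@dvdzE 3 Y'). apply/dvdzP; exists (u * a%:Z + v * a%:Z + b + v).
  rewrite /Y' ha PoszD PoszM. lia.
set M := (Nn %/ 3)%N.
have hM : (M * 3 = Nn)%N by rewrite divnK.
have hM' : (M * 3 = n * n + n + 1)%N by [].
have M3 : ~~ (3 %| M)%N.
  apply/negP => hd. have := N_mod9 n. rewrite -/Nn -hM.
  by rewrite (@dvdn_pmul2r 3 3 M) // hd. 
have co : coprime M 3 by rewrite coprime_sym prime_coprime.
have M0 : (0 < M)%N by move: N0; rewrite -hM muln_gt0 => /andP [].
apply: (fwd_helper _ M3 M0 hr (A := `|Y|) (B := `|Y'|)).
- by rewrite -hM' dvdn_mulr.
- by apply: dvdn_trans hAB; rewrite -hM dvdn_mulr.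
- apply/negP => hd. move: nA. by rewrite -hM Gauss_dvd // hd A3.
- apply/negP => hd. move: nB. by rewrite -hM Gauss_dvd // hd B3.
Qed.


Lemma sqrt_ex (p : nat) : exists s : nat, (s * s <= p < s.+1 * s.+1)%N.
Proof.
elim: p => [|p [s /andP [h1 h2]]]; first by exists 0%N.
case: (ltnP p.+1 (s.+1 * s.+1)) => h.
  by exists s; rewrite h andbT ltnW.
exists s.+1; apply/andP; split => //. lia.
Qed.

Lemma Q_even (a b k : int) : Q a b = 2 * k -> exists a1 b1, a = 2 * a1 /\ b = 2 * b1.
Proof.
rewrite /Q.
have ha := divz_eq a 2; have hb := divz_eq b 2.
have ra : 0 <= (a %% 2)%Z < 2 by apply/andP; split; [apply: modz_ge0| apply: ltz_pmod].
have rb : 0 <= (b %% 2)%Z < 2 by apply/andP; split; [apply: modz_ge0| apply: ltz_pmod].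
move: (a %/ 2)%Z (a %% 2)%Z (b %/ 2)%Z (b %% 2)%Z ha hb ra rb => a1 r1 b1 r2 ha hb ra rb.
have : (r1 = 0 \/ r1 = 1) /\ (r2 = 0 \/ r2 = 1) by lia.
move=> [[e1|e1] [e2|e2]]; subst r1 r2 a b => E.
- by exists a1, b1; split; rewrite addr0 mulrC.
- exfalso. move: E; clear; lia.
- exfalso. move: E; clear; lia.
- exfalso. move: E; clear; lia.
Qed.

Lemma Qpos_lem a b : (a != 0) || (b != 0) -> 0 < Q a b.
Proof.
rewrite /Q => h.
have e : 4 * (a * a + a * b + b * b) = (2 * a + b) * (2 * a + b) + 3 * (b * b) by ring.
case: (eqVneq b 0) => hb.
  subst b. move: h; rewrite eqxx /= orbF => ha. rewrite mulr0 !addr0.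
  have [ha'|ha'] : a < 0 \/ 0 < a by (move/eqP: ha; lia). nia. nia.
have hbb : 0 < b * b.
  have [hb'|hb'] : b < 0 \/ 0 < b by (move/eqP: hb; lia). nia. nia.
have : 0 <= (2 * a + b) * (2 * a + b) by rewrite -expr2 sqr_ge0.
lia.
Qed.
Lemma Qlt_lem a b s p : - s <= a <= s -> - s <= b <= s -> s * s < p -> Q a b < 3 * p.
Proof.
rewrite /Q => /andP [a1 a2] /andP [b1 b2] h.
have : a * a <= s * s by nia.
have : b * b <= s * s by nia.
have : a * b <= s * s by nia.
lia.
Qed.
Lemma k12_lem (k p : int) : 0 < p -> 0 < k * p -> k * p < 3 * p -> k = 1 \/ k = 2.
Proof. move=> h1 h2 h3. nia. Qed.

Lemma thue (p n : nat) : prime p -> (p %| n * n + n + 1)%N -> p != 2%N ->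
  exists a b : int, Q a b = p%:Z /\ (p%:Z %| a - n%:Z * b)%Z.
Proof.
move=> pr hpN p2.
have p0 : (0 < p)%N by apply: prime_gt0.
have [s /andP [hs1 hs2]] := sqrt_ex p.
have hs : (s * s < p)%N.
  rewrite ltn_neqAle hs1 andbT; apply/eqP => ss.
  have : (s %| p)%N by rewrite -ss dvdn_mulr.
  case/primeP: pr => p1 /(_ s) h /h /orP [] /eqP hs'.
    by move: p1; rewrite -ss hs'.
  by move: p1 ss; rewrite hs'; nia.
pose f := fun ij : 'I_s.+1 * 'I_s.+1 => (Ordinal (ltn_pmod (ij.1 + n * ij.2) p0)).
have nf : ~~ injectiveb f.
  apply/negP => /injectiveP /leq_card.
  by rewrite card_prod !card_ord leqNgt hs2.
case/injectivePn: nf => [[i1 j1] [[i2 j2] hne hf]].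
have hmod : ((i1 + n * j1) %% p = (i2 + n * j2) %% p)%N by move: hf => /(congr1 val).
have hd : (p%:Z %| (i1 + n * j1)%N%:Z - (i2 + n * j2)%N%:Z)%Z.
  by rewrite -eqz_mod_dvd !modz_nat hmod.
exists (i1%:Z - i2%:Z), (j2%:Z - j1%:Z).
have hi1 := ltn_ord i1; have hi2 := ltn_ord i2; have hj1 := ltn_ord j1; have hj2 := ltn_ord j2.
have hne' : (i1 != i2 :> nat) || (j1 != j2 :> nat).
  move: hne; rewrite xpair_eqE negb_and.
  by case/orP => h; apply/orP; [left|right].
have hdiv : (p%:Z %| i1%:Z - i2%:Z - n%:Z * (j2%:Z - j1%:Z))%Z.
  move: hd; rewrite !PoszD !PoszM.
  have -> : i1%:Z + n%:Z * j1%:Z - (i2%:Z + n%:Z * j2%:Z) = i1%:Z - i2%:Z - n%:Z * (j2%:Z - j1%:Z) by ring.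
  done.
split => //.
clear hf hmod hd.
have hpN' : (p%:Z %| n%:Z * n%:Z + n%:Z + 1)%Z.
  have e : n%:Z * n%:Z + n%:Z + 1 = (n * n + n + 1)%N%:Z by rewrite !PoszD PoszM.
  by rewrite e dvdzE.
clear hpN f.
have ab0 : (i1%:Z - i2%:Z != 0) || (j2%:Z - j1%:Z != 0).
  move: hne'; case/orP => h; apply/orP; [left|right]; apply/negP => /eqP h'; move: h => /eqP; lia.
have ba : - s%:Z <= i1%:Z - i2%:Z <= s%:Z by move: hi1 hi2; clear; lia.
have bb : - s%:Z <= j2%:Z - j1%:Z <= s%:Z by move: hj1 hj2; clear; lia.
have hsp : s%:Z * s%:Z < p%:Z by move: hs; clear; lia.
move: hdiv ab0 ba bb; move: (i1%:Z - i2%:Z) (j2%:Z - j1%:Z) => a b hdiv ab0 ba bb.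
have hQ : (p%:Z %| Q a b)%Z.
  have -> : Q a b = (a - n%:Z * b) * (a + n%:Z * b + b) + b * b * (n%:Z * n%:Z + n%:Z + 1).
    by rewrite /Q; ring.
  by apply: rpredD; [apply: dvdz_mulr | apply: dvdz_mull].
case/dvdzP: hQ => k hk.
have Qpos : 0 < Q a b by apply: Qpos_lem.
have Qlt : Q a b < 3 * p%:Z by apply: Qlt_lem ba bb hsp.
have k12 : k = 1 \/ k = 2.
  by move: Qpos Qlt; rewrite hk; apply: k12_lem; lia.
case: k12 => ek; rewrite ek in hk; first by rewrite hk mul1r.
have [a1 [b1 [ea eb]]] := Q_even (k := p%:Z) hk.
exfalso. move: hk; rewrite ea eb /Q => hk.
have : p%:Z = 2 * Q a1 b1 by rewrite /Q; move: hk; clear; lia.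
move=> hp2. have : (2 %| p)%N by rewrite -(@dvdzE 2 p); apply/dvdzP; exists (Q a1 b1); rewrite hp2 mulrC.
by rewrite dvdn_prime2 // eq_sym (negbTE p2).
Qed.


Lemma decomp (p n : nat) : prime p -> (p %| n * n + n + 1)%N -> p != 2%N ->
  exists c d x y : int, [/\ Q c d = p%:Z, c * x + d * y = 1 & d * x - c * y - d * y = n%:Z].
Proof.
move=> pr hpN p2.
have [a [b [hQ hd]]] := thue pr hpN p2.
case/dvdzP: hd => x0 hx0.
case/dvdnP: hpN => t ht.
have ht' : n%:Z * n%:Z + n%:Z + 1 = t%:Z * p%:Z.
  by have := congr1 Posz ht; rewrite !PoszD !PoszM.
have hy0 : b + n%:Z * a + n%:Z * b = (n%:Z * x0 + b * t%:Z) * p%:Z.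
  have -> : b + n%:Z * a + n%:Z * b = n%:Z * (a - n%:Z * b) + b * (n%:Z * n%:Z + n%:Z + 1) by ring.
  by rewrite hx0 ht'; ring.
have p0 : p%:Z != 0 by rewrite eqz_nat -lt0n prime_gt0.
exists (a + b), (- b), x0, (- (n%:Z * x0 + b * t%:Z)); split => //.
- by rewrite -hQ /Q; ring.
- apply: (mulIf p0). rewrite mul1r -{2}hQ.
  have -> : (a + b) * x0 + - b * - (n%:Z * x0 + b * t%:Z) = (a + b) * x0 + b * (n%:Z * x0 + b * t%:Z) by ring.
  rewrite mulrDl -!mulrA -hx0 -hy0 /Q; ring.
- apply: (mulIf p0).
  have -> : (- b * x0 - (a + b) * - (n%:Z * x0 + b * t%:Z) - - b * - (n%:Z * x0 + b * t%:Z)) * p%:Z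
    = - b * (x0 * p%:Z) + a * ((n%:Z * x0 + b * t%:Z) * p%:Z) by ring.
  rewrite -hx0 -hy0 -hQ /Q; ring.
Qed.


Definition dv2 (N u v : int) : bool := (N %| u)%Z && (N %| v)%Z.

Definition Cc (N t1 t2 a b : int) : bool :=
  dv2 N (a * t1 + a * t2 + b * t2) (a * t2 - b * t1) ||
  dv2 N (a * t1 - b * t2) (a * t2 + b * t1 + b * t2).

Lemma dv2_lin N u v al be ga de : dv2 N u v -> dv2 N (al * u + be * v) (ga * u + de * v).
Proof.
move=> /andP [hu hv]; apply/andP; split; apply: rpredD; apply: dvdz_mull => //.
Qed.

Lemma dv2_eq N u v u' v' : dv2 N u v -> u = u' -> v = v' -> dv2 N u' v'.
Proof. by move=> h <- <-. Qed.

Lemma Cneg N t1 t2 a b : Cc N t1 t2 (- a) (- b) -> Cc N t1 t2 a b.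
Proof.
case/orP => h; apply/orP; [left|right]; move/(dv2_lin (-1) 0 0 (-1)): h => h;
  apply: (dv2_eq h); ring.
Qed.

Lemma Cswap N t1 t2 a b : Cc N t1 t2 b a -> Cc N t1 t2 a b.
Proof.
case/orP => h; apply/orP; [right|left].
- move/(dv2_lin 0 (-1) 1 0): h => h; apply: (dv2_eq h); ring.
- move/(dv2_lin 0 1 (-1) 0): h => h; apply: (dv2_eq h); ring.
Qed.

Lemma Crot N t1 t2 a b : Cc N t1 t2 b (- a - b) -> Cc N t1 t2 a b.
Proof.
case/orP => h; apply/orP; [left|right].
- move/(dv2_lin (-1) 1 (-1) 0): h => h; apply: (dv2_eq h); ring.
- move/(dv2_lin (-1) (-1) 1 0): h => h; apply: (dv2_eq h); ring.
Qed.

Lemma Crot2 N t1 t2 a b : Cc N t1 t2 (- a - b) a -> Cc N t1 t2 a b.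
Proof. move=> h; apply: Crot; apply: Crot. by have -> : - b - (- a - b) = a by ring. Qed.
Lemma Cnrot N t1 t2 a b : Cc N t1 t2 (- b) (a + b) -> Cc N t1 t2 a b.
Proof. move=> h; apply: Crot; apply: Cneg. by have -> : - (- a - b) = a + b by ring. Qed.

Lemma pos_rep N t1 t2 a b : (a != 0) || (b != 0) ->
  exists a' b', [/\ 1 <= a', 0 <= b', Q a' b' = Q a b & (Cc N t1 t2 a' b' -> Cc N t1 t2 a b)].
Proof.
move=> ab.
have QE1 : Q (- b) (a + b) = Q a b by rewrite /Q; ring.
have QE2 : Q (- a - b) a = Q a b by rewrite /Q; ring.
have QE3 : Q (- b) (- a) = Q a b by rewrite /Q; ring.
have QE4 : Q (- a) (a + b) = Q a b by rewrite /Q; ring.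
have QE5 : Q (- a - b) b = Q a b by rewrite /Q; ring.
have QE6 : Q b a = Q a b by rewrite /Q; ring.
have QE7 : Q (- a) (- b) = Q a b by rewrite /Q; ring.
have rot2 := @Crot2 N t1 t2. have nrot := @Cnrot N t1 t2.
have nswap : Cc N t1 t2 (- b) (- a) -> Cc N t1 t2 a b.
  by move=> h; apply: Cswap; apply: Cneg.
have [h1|h1] := lerP 1 a.
  have [h2|h2] := lerP 0 b.
    by exists a, b; split.
  have [h3|h3] := lerP 0 (a + b).
    by exists (- b), (a + b); split; [lia | lia | rewrite /Q; ring | exact: nrot].
  by exists (- a - b), a; split; [lia | lia | rewrite /Q; ring | exact: rot2].
have [h2|h2] := lerP b (-1).
  by exists (- b), (- a); split; [lia | lia | rewrite /Q; ring | exact: nswap].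
have [h3|h3] := eqVneq b 0.
  subst b. exists (- a), 0; split; [ | lia | rewrite /Q; ring | ].
  - move: ab; rewrite eqxx orbF => /eqP; lia.
  - by move=> h; apply: Cneg; rewrite oppr0.
have [h4|h4] := eqVneq a 0.
  subst a. exists b, 0; split; [ | lia | rewrite /Q; ring | ].
  - move/eqP: h3; lia.
  - by move=> h; apply: Cswap.
have [h5|h5] := lerP 0 (a + b).
  exists (- a), (a + b); split; [ | lia | rewrite /Q; ring | ].
  - move/eqP: h4; lia.
  - by move=> h; apply: Cswap; apply: nrot; rewrite addrC.
exists (- a - b), b; split; [ lia | lia | rewrite /Q; ring | ].
by move=> h; apply: Cswap; apply: rot2; rewrite addrC.
Qed.


Lemma not_dvd3 (p : nat) : prime p -> (p %% 3 = 1)%N -> ~ (p%:Z %| 3)%Z.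
Proof.
move=> pr hp; rewrite dvdzE /= (@dvdn_prime2 p 3) // => /eqP e.
by move: hp; rewrite e.
Qed.

Lemma not_dvd1 (p : nat) : prime p -> ~ (p%:Z %| 1)%Z.
Proof. by move=> pr; rewrite dvdzE /= dvdn1 => /eqP e; move: pr; rewrite e. Qed.

Lemma pq1 (p z : int) : 1 < p -> p * z = 1 -> False.
Proof. by move=> h1 h2; case: (lerP z 0) => h; nia. Qed.

Lemma noC_d (p : nat) c d : prime p -> Q c d = p%:Z -> (p%:Z %| d)%Z -> False.
Proof.
move=> pr hQ /dvdzP [k hk].
have hc : (p%:Z %| c * c)%Z.
  apply/dvdzP; exists (1 - c * k - d * k).
  have -> : c * c = Q c d - c * d - d * d by rewrite /Q; ring.
  by rewrite hQ {1 2}hk; ring.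
case: (dvdz_primeM pr hc) => /dvdzP [l hl].
all: have p1 : 1 < p%:Z by have := prime_gt1 pr; lia.
all: move: hQ; rewrite /Q hl hk => hQ.
all: have : p%:Z * (p%:Z * (l * l + l * k + k * k) - 1) = 0 by move: hQ; clear; lia.
all: move/eqP; rewrite mulf_eq0 => /orP [/eqP|/eqP]; [lia| move=> e].
all: have e' : p%:Z * (l * l + l * k + k * k) = 1 by lia.
all: exact: (pq1 p1 e').
Qed.

Lemma noC1 (p : nat) c d : prime p -> (p %% 3 = 1)%N -> Q c d = p%:Z ->
  (p%:Z %| d * (2 * c + d))%Z -> False.
Proof.
move=> pr hp hQ /(dvdz_primeM pr) [hd|].
  exact: (noC_d pr hQ hd).
move=> /dvdzP [e he].
have h3 : (p%:Z %| 3 * (d * d))%Z.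
  apply/dvdzP; exists (4 - e * e * p%:Z).
  have -> : 3 * (d * d) = 4 * Q c d - (2 * c + d) * (2 * c + d) by rewrite /Q; ring.
  by rewrite hQ he; ring.
case: (dvdz_primeM pr h3); first exact: not_dvd3.
case/(dvdz_primeM pr) => hd; exact: (noC_d pr hQ hd).
Qed.

Lemma noC2 (q : nat) c d x y : prime q -> (q %% 3 = 1)%N -> c * x + d * y = 1 ->
  (q%:Z %| x * x - x * y + y * y)%Z -> (q%:Z %| y * (2 * x - y))%Z -> False.
Proof.
move=> qr hq h1 hm.
have noy : (q%:Z %| y)%Z -> False.
  move=> hy.
  have hx : (q%:Z %| x * x)%Z.
    have -> : x * x = (x * x - x * y + y * y) - (y * (y - x)) by ring.
    by apply: rpredB => //; apply: dvdz_mulr.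
  have hx' : (q%:Z %| x)%Z by case: (dvdz_primeM qr hx).
  have hcd : (q%:Z %| c * x + d * y)%Z by apply: rpredD; apply: dvdz_mull.
  by rewrite h1 in hcd; apply: (not_dvd1 qr).
case/(dvdz_primeM qr) => [//|/dvdzP [e he]].
have h3 : (q%:Z %| 3 * (y * y))%Z.
  case/dvdzP: hm => f hf.
  apply/dvdzP; exists (4 * f - e * e * q%:Z).
  have -> : 3 * (y * y) = 4 * (x * x - x * y + y * y) - (2 * x - y) * (2 * x - y) by ring.
  by rewrite hf he; ring.
case: (dvdz_primeM qr h3); first exact: not_dvd3.
by case/(dvdz_primeM qr).
Qed.


Lemma sq_not (n a : int) : 1 <= n -> a * a = n * n + n + 1 -> False.
Proof.
move=> h1 h2.
have [h|h] := lerP (n + 1) a.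
  have : (n + 1) * (n + 1) <= a * a by apply: ler_pM; lia.
  lia.
have [h'|h'] := lerP a (- n - 1).
  have : (n + 1) * (n + 1) <= (- a) * (- a) by apply: ler_pM; lia.
  rewrite mulrNN. lia.
have : (n - a) * (n + a) >= 0 by apply: mulr_ge0; lia.
lia.
Qed.

Lemma sq_one (n a : int) : 0 <= n -> 1 <= a -> a * a + a + 1 = n * n + n + 1 -> a = n.
Proof. move=> h1 h2 h3. have : (a - n) * (a + n + 1) = 0 by lia. move/eqP; rewrite mulf_eq0 => /orP [] /eqP; lia. Qed.

Lemma bwd (n p q : nat) : (0 < n)%N -> prime p -> prime q -> (p %% 3 = 1)%N -> (q %% 3 = 1)%N ->
  (p * q %| n * n + n + 1)%N ->
  exists u v : int, 2 <= u /\ 2 <= v /\ Q u v = (n * n + n + 1)%N%:Z.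
Proof.
move=> n0 pr qr hp hq hpq.
set Nn := (n * n + n + 1)%N.
have hN : Nn%:Z = n%:Z * n%:Z + n%:Z + 1 by rewrite /Nn !PoszD PoszM.
have hpN : (p %| Nn)%N by apply: dvdn_trans hpq; apply: dvdn_mulr.
have p2 : p != 2%N by apply/eqP => e; move: hp; rewrite e.
have [c [d [x [y [hQ h1 hn]]]]] := decomp pr hpN p2.
set m := x * x - x * y + y * y.
have hNm : Nn%:Z = m * p%:Z.
  have id : Q (c * x + d * y) (d * x - c * y - d * y) = Q c d * m by rewrite /Q /m; ring.
  by rewrite h1 hn hQ /Q in id; rewrite hN [m * _]mulrC -id; ring.
have p0 : p%:Z != 0 by rewrite eqz_nat -lt0n prime_gt0.
have m0 : m != 0.
  apply/eqP => m0. by move: hNm; rewrite m0 mul0r /Nn addn1.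
have hqm : (q%:Z %| m)%Z.
  have : ((p * q)%N%:Z %| Nn%:Z)%Z by rewrite dvdzE.
  by rewrite hNm PoszM [m * _]mulrC dvdz_mul2l.
set aR := (c + d) * x - d * y.
set bR := - (c * y + d * x).
have QR : Q aR bR = Nn%:Z by rewrite hNm -hQ /Q /aR /bR /m; ring.
have ab0 : (aR != 0) || (bR != 0).
  case: (eqVneq aR 0) => a0 //=; case: (eqVneq bR 0) => b0 //.
  by move: QR; rewrite a0 b0 /Q !mul0r !addr0 /Nn addn1.
have nC : ~~ Cc Nn%:Z 1 n%:Z aR bR.
  rewrite -h1 -hn. apply/negP; rewrite /Cc /dv2 => /orP [] /andP [_ h].
  - have e2 : aR * (d * x - c * y - d * y) - bR * (c * x + d * y) = m * (d * (2 * c + d)).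
      by rewrite /aR /bR /m; ring.
    move: h; rewrite e2 hNm dvdz_mul2l // => h.
    exact: (noC1 pr hp hQ h).
  - have e4 : aR * (d * x - c * y - d * y) + bR * (c * x + d * y) + bR * (d * x - c * y - d * y)
        = p%:Z * (- (y * (2 * x - y))).
      by rewrite /aR /bR -hQ /Q; ring.
    move: h; rewrite e4 hNm [m * _]mulrC dvdz_mul2l // rpredN => h.
    exact: (noC2 qr hq h1 hqm (dvdz_trans hqm h)).
have [a' [b' [ha' hb' hQ' hC]]] := pos_rep Nn%:Z 1 n%:Z ab0.
rewrite QR in hQ'.
have nC' : ~~ Cc Nn%:Z 1 n%:Z a' b' by apply/negP => /hC; apply/negP.
have nn : 1 <= n%:Z by lia.
exists a', b'.
have b'0 : b' != 0.
  apply/negP => /eqP e; subst b'. move: hQ'; rewrite hN /Q !mulr0 !addr0 => e.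
  exact: (sq_not nn e).
have a'1 : a' != 1.
  apply/negP => /eqP e; subst a'.
  have eb : b' = n%:Z.
    apply: sq_one; [lia | by move/eqP: b'0; lia | move: hQ'; rewrite hN /Q; lia].
  subst b'. move: nC'; rewrite /Cc /dv2 hN !mul1r !mulr1.
  have -> : 1 + n%:Z + n%:Z * n%:Z = n%:Z * n%:Z + n%:Z + 1 by ring.
  by rewrite subrr dvdz0 dvdzz.
have b'1 : b' != 1.
  apply/negP => /eqP e; subst b'.
  have ea : a' = n%:Z.
    apply: sq_one; [lia | lia | move: hQ'; rewrite hN /Q; lia].
  subst a'. move: nC'; rewrite /Cc /dv2 hN !mul1r !mulr1.
  rewrite subrr dvdz0 /=.
  have -> : n%:Z * n%:Z + 1 + n%:Z = n%:Z * n%:Z + n%:Z + 1 by ring.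
  by rewrite dvdzz orbT.
split; last split => //.
- by move/eqP: a'1; lia.
- by move/eqP: b'0; move/eqP: b'1; lia.
Qed.

Unset Implicit Arguments.

Theorem theorem2 (n : nat) (hn : (0 < n)%N) :
  (exists k x : int, nontrivial_solution n k x) <->
  (2 <= count_1mod3_factors (n ^ 2 + n + 1))%N.
Proof.
rewrite reduce -mulnn count_pair; last by rewrite addn1.
split.
- move=> [u [v [hu [hv E]]]]. exact: (fwd hu hv E).
- move=> [p [q [pr qr hp hq hpq]]]. exact: (bwd hn pr qr hp hq hpq).
Qed.
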